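(* Let $G$ be an affine group scheme over a unital commutative ring $K$ and let $H\colon\mathbf{Ring}_K\to\mathbf{Group}$ be a subgroup functor of $G$. Suppose $H$ is scheme generated by a morphism $f\colon X\to G$ from an affine $K$-scheme $X$, and let $f'\colon X'\to G$ be a morphism from an affine $K$-scheme $X'$ with $f'(X'(R))\subseteq H(R)$ for all $R\in\mathbf{Ring}_K$. Then there is $n\ge0$ such that $$f'(X'(R))\subseteq\big(f(X(R))\cup\{1\}\cup f(X(R))^{-1}\big)^n\quad\text{for all }R\in\mathbf{Ring}_K.$$ In particular, if $f'$ also scheme generates $H$, then the group subobjects of $G$ in $\mathrm{Ind}(\mathrm{Fun}(\mathbf{Ring}^{fp}_K,\mathbf{Set}))$ generated by the images of $f$ and of $f'$ coincide.
   Context: $\mathbf{Ring}_K$ ($\mathbf{Ring}_K^{fp}$) is the category of unital (finitely presented unital) commutative $K$-algebras; schemes are identified with their functors of points. A subgroup functor $H\le G$ is scheme generated by $f\colon X\to G$ ($X$ an affine $K$-scheme) if $H(R)$ equals the abstract subgroup of $G(R)$ generated by $f(X(R))$ for every $R\in\mathbf{Ring}_K$. For subsets $Y$ of a group, $Y^n$ is the set of products of $n$ elements of $Y$. $\mathrm{Ind}(\mathbf C)$ is the ind-completion (small filtered direct systems); for a subobject $Y$ of a group object there, $\langle Y\rangle=\varinjlim_n(Y\cup\{1\}\cup Y^{-1})^n$ is the generated group subobject; $G$ and the functors of points of $X,X'$ are viewed as objects of $\mathrm{Fun}(\mathbf{Ring}^{fp}_K,\mathbf{Set})$. *)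

(* Defs.v *)
(* Affine K-schemes are handled through their functors of
   points on the category Ring_K of commutative unital K-algebras. *)
From HB Require Import structures.
From Stdlib Require List.
From mathcomp Require Import all_boot all_algebra.
Set Implicit Arguments. Unset Strict Implicit. Unset Printing Implicit Defensive.
Import GRing.Theory.
Local Open Scope ring_scope.

Definition is_rhom (A B : pzRingType) (f : A -> B) : Prop :=
  [/\ forall a b, f (a + b) = f a + f b,
      forall a b, f (a * b) = f a * f b & f 1 = 1].

(* Objects of Ring_K: a commutative unital ring together with its structure
   ring map K -> R (the zero ring is allowed). *)
Record kalg (K : comPzRingType) := KAlg {
  kcar :> comPzRingType;
  kstr : K -> kcar;
  kstr_hom : is_rhom kstr }.

Definition is_alghom (K : comPzRingType) (A B : kalg K) (f : A -> B) : Prop :=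
  is_rhom f /\ forall k, f (kstr A k) = kstr B k.

(* Finitely presented K-algebras: R is generated by finitely many elements
   x_0..x_{n-1} subject to finitely many polynomial relations, i.e. R is the
   quotient K[X_0..X_{n-1}]/(rels).  Polynomials over K are represented by
   formal terms; the presentation is expressed by its universal property. *)
Inductive kterm (K : comPzRingType) (n : nat) :=
| KVar of 'I_n
| KConst of K
| KAdd of kterm K n & kterm K n
| KMul of kterm K n & kterm K n
| KOpp of kterm K n.

Fixpoint keval (K : comPzRingType) (n : nat) (R : kalg K) (x : 'I_n -> R)
    (t : kterm K n) : R :=
  match t with
  | KVar i => x i
  | KConst k => kstr R k
  | KAdd a b => keval x a + keval x b
  | KMul a b => keval x a * keval x b
  | KOpp a => - keval x a
  end.

Definition fin_pres (K : comPzRingType) (R : kalg K) : Prop :=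
  exists (n : nat) (x : 'I_n -> R) (rels : seq (kterm K n)),
    [/\ forall r : R, exists t, r = keval x t,
        forall t, Stdlib.Lists.List.In t rels -> keval x t = 0 &
        forall (S : kalg K) (y : 'I_n -> S),
          (forall t, Stdlib.Lists.List.In t rels -> keval y t = 0) ->
          exists phi : R -> S, is_alghom phi /\ forall i, phi (x i) = y i].

(* Affine group scheme G = Spec O over K, given (Yoneda) as a representable
   group-valued functor: G(R) = Hom_K(O, R) carries a group structure natural
   in R. *)
Record gscheme (K : comPzRingType) := GScheme {
  gO : kalg K;
  gmul : forall R : kalg K, (gO -> R) -> (gO -> R) -> (gO -> R);
  gone : forall R : kalg K, gO -> R;
  ginv : forall R : kalg K, (gO -> R) -> (gO -> R);
  gmul_hom : forall R x y, is_alghom x -> is_alghom y -> is_alghom (@gmul R x y);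
  gone_hom : forall R, is_alghom (gone R);
  ginv_hom : forall R x, is_alghom x -> is_alghom (@ginv R x);
  gmulA : forall R x y z, is_alghom x -> is_alghom y -> is_alghom z ->
     @gmul R x (gmul y z) = gmul (gmul x y) z;
  gmul1 : forall R x, is_alghom x -> @gmul R (gone R) x = x;
  gmulV : forall R x, is_alghom x -> @gmul R (ginv x) x = gone R;
  gmul_nat : forall (R S : kalg K) (phi : R -> S) x y, is_alghom phi ->
     is_alghom x -> is_alghom y ->
     phi \o @gmul R x y = gmul (phi \o x) (phi \o y);
  gone_nat : forall (R S : kalg K) (phi : R -> S), is_alghom phi ->
     phi \o gone R = gone S;
  ginv_nat : forall (R S : kalg K) (phi : R -> S) x, is_alghom phi ->
     is_alghom x -> phi \o @ginv R x = ginv (phi \o x) }.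

Section GS.
Context {K : comPzRingType} (G : gscheme K).

Definition gsubset (R : kalg K) := (gO G -> R) -> Prop.

Definition is_subgroup (R : kalg K) (S : gsubset R) : Prop :=
  [/\ forall x, S x -> is_alghom x, S (@gone _ G R),
      forall x y, S x -> S y -> S (gmul x y) &
      forall x, S x -> S (ginv x)].

Definition gen_subgroup (R : kalg K) (Y : gsubset R) : gsubset R :=
  fun x => forall S, is_subgroup S -> (forall y, Y y -> S y) -> S x.

Definition subgroup_functor (H : forall R : kalg K, gsubset R) : Prop :=
  (forall R, is_subgroup (H R)) /\
  (forall (R S : kalg K) (phi : R -> S) x, is_alghom phi -> H R x ->
     H S (phi \o x)).

(* f(X(R)) for a morphism f : X = Spec B -> G, given by the K-algebra map
   f : O(G) -> B (pulling back points x : B -> R to x \o f). *)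
Definition img (B : kalg K) (f : gO G -> B) (R : kalg K) : gsubset R :=
  fun y => exists p : B -> R, is_alghom p /\ y = p \o f.

Definition scheme_generates (H : forall R : kalg K, gsubset R)
    (B : kalg K) (f : gO G -> B) : Prop :=
  forall (R : kalg K) x, H R x <-> gen_subgroup (@img B f R) x.

Definition symm (R : kalg K) (Y : gsubset R) : gsubset R :=
  fun y => Y y \/ y = @gone _ G R \/ exists z, Y z /\ y = ginv z.

Fixpoint gpow (R : kalg K) (Y : gsubset R) (n : nat) : gsubset R :=
  match n with
  | 0 => fun y => y = @gone _ G R
  | n'.+1 => fun y => exists a b, gpow Y n' a /\ symm Y b /\ y = gmul a b
  end.

(* The generated group subobject <Y> = colim_n (Y ∪ 1 ∪ Y^-1)^n in
   Ind(Fun(Ring_K^fp, Set)), as the nat-indexed filtered system of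
   subfunctors of G restricted to finitely presented algebras. *)
Definition ind_gen (B : kalg K) (f : gO G -> B) :
  nat -> forall R : kalg K, gsubset R :=
  fun n R y => fin_pres R /\ gpow (@img _ f R) n y.

(* Inclusion of subobjects of (the constant ind-object) G in the Ind
   category: Hom(colim_n Y_n, colim_m Y'_m) = lim_n colim_m Hom(Y_n, Y'_m),
   so "colim Y <= colim Y'" over G means each Y_n factors through some Y'_m. *)
Definition ind_sub_le (Y Y' : nat -> forall R : kalg K, gsubset R) : Prop :=
  forall n, exists m, forall (R : kalg K), fin_pres R ->
    forall y, Y n R y -> Y' m R y.

Definition ind_sub_eq (Y Y' : nat -> forall R : kalg K, gsubset R) : Prop :=
  ind_sub_le Y Y' /\ ind_sub_le Y' Y.

End GS.

(* Main.v *)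
Require Import Defs.
From mathcomp Require Import all_boot all_algebra.

Section L.
Local Set Implicit Arguments.
Variables (K : comPzRingType) (G : gscheme K).

Lemma comp_hom (A B C : kalg K) (p : B -> C) (q : A -> B) :
  is_alghom p -> is_alghom q -> is_alghom (p \o q).
Proof.
move=> [[pa pm p1] pk] [[qa qm q1] qk]; split; first split.
- by move=> a b /=; rewrite qa pa.
- by move=> a b /=; rewrite qm pm.
- by rewrite /= q1 p1.
- by move=> k /=; rewrite qk pk.
Qed.

Lemma id_hom (A : kalg K) : is_alghom (fun a : A => a).
Proof. by split; first split. Qed.

Section R.
Variable R : kalg K.
Local Notation alg := (fun x : gO G -> R => is_alghom x).
Local Notation one := (@gone _ G R).

Lemma mulVg' x : alg x -> gmul x (ginv x) = one.
Proof.
move=> hx; have hy := ginv_hom hx; have hz := ginv_hom hy.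
have hxy := gmul_hom hx hy.
rewrite -(gmul1 hxy) -{1}(gmulV hy) -(gmulA hz hy hxy) (gmulA hy hx hy).
by rewrite (gmulV hx) (gmul1 hy) (gmulV hy).
Qed.

Lemma mulg1' x : alg x -> gmul x one = x.
Proof.
move=> hx; have hy := ginv_hom hx.
by rewrite -(gmulV hx) gmulA // mulVg' // gmul1.
Qed.

Lemma invg_uniq a b : alg a -> alg b -> gmul a b = one -> a = ginv b.
Proof.
move=> ha hb e; have hy := ginv_hom hb.
by rewrite -(mulg1' ha) -(mulVg' hb) gmulA // e gmul1.
Qed.

Lemma invgK x : alg x -> ginv (ginv x) = x.
Proof.
move=> hx; symmetry; apply: invg_uniq => //; [exact: ginv_hom | exact: mulVg'].
Qed.

Lemma invg1 : ginv one = one.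
Proof.
have h := gone_hom G R; symmetry; apply: invg_uniq => //; exact: gmul1.
Qed.

Lemma invgM x y : alg x -> alg y -> ginv (gmul x y) = gmul (ginv y) (ginv x).
Proof.
move=> hx hy; have hx' := ginv_hom hx; have hy' := ginv_hom hy.
symmetry; apply: invg_uniq; [exact: gmul_hom | exact: gmul_hom |].
rewrite (gmulA (gmul_hom hy' hx') hx hy) -(gmulA hy' hx' hx) (gmulV hx).
by rewrite (mulg1' hy') (gmulV hy).
Qed.

Variable Y : gsubset G R.
Hypothesis YH : forall y, Y y -> is_alghom y.

Lemma symm_hom s : symm Y s -> alg s.
Proof.
case=> [/YH //|[-> |[z [/YH hz ->]]]]; [exact: gone_hom | exact: ginv_hom].
Qed.

Lemma gpow_hom n y : gpow Y n y -> alg y.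
Proof.
elim: n y => [y -> | n IH y [a [b [ha [hb ->]]]]]; first exact: gone_hom.
apply: gmul_hom; [exact: IH | exact: symm_hom].
Qed.

Arguments gpow_hom [n y].

Lemma gpow_cat m n a b : gpow Y m a -> gpow Y n b -> gpow Y (m + n) (gmul a b).
Proof.
move=> ha; elim: n b => [b -> | n IH b [c [s [hc [hs ->]]]]].
  by rewrite addn0 mulg1' //; exact: gpow_hom ha.
rewrite addnS; exists (gmul a c), s; split; first exact: IH.
split=> //; rewrite gmulA //; [exact: gpow_hom ha | exact: gpow_hom hc | exact: symm_hom].
Qed.

Lemma gpow1 y : symm Y y -> gpow Y 1 y.
Proof. by move=> hy; exists one, y; split=> //; split=> //; rewrite gmul1 //; exact: symm_hom. Qed.

Lemma gpow_one j : gpow Y j one.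
Proof.
elim: j => [//|j IH]; exists one, one; split=> //; split; first by right; left.
by rewrite gmul1 //; exact: gone_hom.
Qed.

Lemma gpow_pad j n y : gpow Y n y -> gpow Y (j + n) y.
Proof.
move=> hy; rewrite -(gmul1 (gpow_hom hy)); apply: gpow_cat => //; exact: gpow_one.
Qed.

Lemma symm_inv s : symm Y s -> symm Y (ginv s).
Proof.
case=> [hs|[-> |[z [hz ->]]]].
- by right; right; exists s.
- by right; left; rewrite invg1.
- by left; rewrite invgK //; exact: YH.
Qed.

Lemma gpow_inv n y : gpow Y n y -> gpow Y n (ginv y).
Proof.
elim: n y => [y -> | n IH y [a [s [ha [hs ->]]]]]; first by rewrite invg1.
rewrite invgM; [|exact: gpow_hom ha| exact: symm_hom].
rewrite -add1n; apply: gpow_cat; [exact/gpow1/symm_inv | exact: IH].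
Qed.

Lemma gen_gpow x : gen_subgroup Y x -> exists n, gpow Y n x.
Proof.
move=> hx; apply: (hx (fun z => exists n, gpow Y n z)); last first.
  by move=> y hy; exists 1%N; apply: gpow1; left.
split.
- by move=> z [n hn]; exact: gpow_hom hn.
- by exists 0%N.
- by move=> a b [m hm] [n hn]; exists (m + n)%N; exact: gpow_cat.
- by move=> a [n hn]; exists n; exact: gpow_inv.
Qed.
End R.


Lemma img_hom (B : kalg K) (f : gO G -> B) (R : kalg K) :
  is_alghom f -> forall y, @img _ G _ f R y -> is_alghom y.
Proof. by move=> hf y [p [hp ->]]; exact: comp_hom. Qed.

Lemma gpow_nat (B : kalg K) (f : gO G -> B) (hf : is_alghom f) (R S : kalg K)
  (phi : R -> S) (hphi : is_alghom phi) n y :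
  gpow (@img _ G _ f R) n y -> gpow (@img _ G _ f S) n (phi \o y).
Proof.
elim: n y => [y -> | n IH y [a [s [ha [hs ->]]]]]; first exact: gone_nat.
have Ha := gpow_hom _ (@img_hom _ _ R hf) _ _ ha; have Hs := symm_hom (@img_hom _ _ R hf) hs.
rewrite gmul_nat //; exists (phi \o a), (phi \o s); split; first exact: IH.
split=> //; case: hs => [[p [hp ->]]|[-> |[z [[p [hp ->]] ->]]]].
- by left; exists (phi \o p); split=> //; exact: comp_hom.
- by right; left; exact: gone_nat.
- right; right; exists (phi \o (p \o f)); split.
    by exists (phi \o p); split=> //; exact: comp_hom.
  by rewrite ginv_nat //; exact: comp_hom.
Qed.

Lemma main1 (H : forall R : kalg K, gsubset G R)
  (X : kalg K) (f : gO G -> X) (f_hom : is_alghom f)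
  (Hgen : scheme_generates H f)
  (B : kalg K) (g : gO G -> B) (g_hom : is_alghom g)
  (Hg : forall (R : kalg K) y, @img _ G _ g R y -> H R y) :
  exists n : nat, forall (R : kalg K) y, @img _ G _ g R y -> gpow (@img _ G _ f R) n y.
Proof.
have : H B g by apply: Hg; exists (fun b => b); split=> //; exact: id_hom.
move=> /Hgen /(gen_gpow (img_hom f_hom)) [n hn]; exists n.
by move=> R y [p [hp ->]]; exact: gpow_nat.
Qed.

Lemma le_dir (H : forall R : kalg K, gsubset G R)
  (X : kalg K) (f : gO G -> X) (f_hom : is_alghom f)
  (Hgen : scheme_generates H f)
  (X' : kalg K) (f' : gO G -> X') (f'_hom : is_alghom f')
  (Hgen' : scheme_generates H f') :
  ind_sub_le (ind_gen f) (ind_gen f').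
Proof.
have [k hk] : exists k, forall (R : kalg K) y, @img _ G _ f R y -> gpow (@img _ G _ f' R) k y.
  apply: (main1 f'_hom Hgen' f_hom) => R y hy; apply/Hgen => S _ HS; exact: HS.
have key : forall (R : kalg K) n y, gpow (@img _ G _ f R) n y ->
    gpow (@img _ G _ f' R) (n * k) y.
  move=> R; elim=> [y -> //| n IH y [a [s [ha [hs ->]]]]].
  rewrite mulSnr; apply: gpow_cat; first exact: img_hom f'_hom.
    exact: IH.
  case: hs => [/hk //|[-> |[z [/hk hz ->]]]].
  - by apply: gpow_one; exact: img_hom f'_hom.
  - by apply: gpow_inv => //; exact: img_hom f'_hom.
by move=> n; exists (n * k)%N => R _ y [hR hy]; split=> //; exact: key.
Qed.
End L.

Theorem lemma24 (K : comPzRingType) (G : gscheme K)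
  (H : forall R : kalg K, gsubset G R) (HH : subgroup_functor H)
  (X : kalg K) (f : gO G -> X) (f_hom : is_alghom f)
  (Hgen : scheme_generates H f)
  (X' : kalg K) (f' : gO G -> X') (f'_hom : is_alghom f')
  (Himg : forall (R : kalg K) y, @img _ G _ f' R y -> H R y) :
  (exists n : nat, forall (R : kalg K) y, @img _ G _ f' R y -> gpow (@img _ G _ f R) n y) /\
  (scheme_generates H f' -> ind_sub_eq (ind_gen f) (ind_gen f')).
Proof.
split; first exact: (main1 f_hom Hgen f'_hom Himg).
by move=> Hgen'; split; apply: le_dir.
Qed.
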